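(* Let $\mathcal S$ be a trajectory set satisfying $\bar\sigma(0)\ge0$. Then the hedging price integral in the sense of Leinert $\int_{(L)}:\mathcal L^1_{(L)}\to\mathbb R$ is linear, positive (i.e. $\int_{(L)}f\ge0$ whenever $f\in\mathcal L^1_{(L)}$ and $f\ge0$ on $\mathcal S$), continuous with respect to $\|\cdot\|$, and constant-preserving (i.e. $\int_{(L)}c=c$ for every constant function $c\in\mathbb R$).
   Context: Fix $s_0\in\mathbb R$. A trajectory set is any set $\mathcal S$ of real sequences $S=(S_j)_{j\in\mathbb N_0}$ with $S_0=s_0$. A simple portfolio $(V,n,H)$ consists of $V\in\mathbb R$, $n\in\mathbb N$ and nonanticipating functions $H_i:\mathcal S\to\mathbb R$, $0\le i\le n-1$ (i.e. $H_i(S)=h_i(S_0,\dots,S_i)$ for some arbitrary $h_i:\mathbb R^{i+1}\to\mathbb R$). Its wealth is $\Pi^{V,n,H}_j(S)=V+\sum_{i=0}^{\min\{j,n\}-1}H_i(S)(S_{i+1}-S_i)$ and $\Pi^{V,n,H}_\infty:=\Pi^{V,n,H}_n$; it is positive if $V\ge0$ and $\Pi^{V,n,H}_\infty\ge0$ on $\mathcal S$. A generalized portfolio is a sequence $(V_m,n_m,H_m)_{m\in\mathbb N_0}$ of simple portfolios, positive for every $m\ge1$; it is a positive generalized portfolio if moreover $\Pi^{V_0,n_0,H_0}_j\equiv0$ for all $j$. A map $f:\mathcal S\to[-\infty,+\infty]$ is superhedged with initial endowment $V=\sum_{m=0}^\infty V_m\in(-\infty,+\infty]$ by such a portfolio if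 $f\le\sum_{m=0}^\infty\Pi^{V_m,n_m,H_m}_\infty$ on $\mathcal S$. For $f\ge0$, $\bar I(f)$ is the infimum of initial endowments of positive generalized portfolios superhedging $f$; $\bar\sigma(f)$ is the infimum of initial endowments of generalized portfolios superhedging $f$. Let $\mathcal E=\{\Pi^{V,n,H}_\infty\}$ (over all simple portfolios). Under $\bar\sigma(0)\ge0$, the map $I(\Pi^{V,n,H}_\infty):=V$ is a well-defined linear functional on $\mathcal E$. Define $\|f\|:=\bar I(|f|)$ for $f:\mathcal S\to[-\infty,+\infty]$; let $\mathcal F$ be the space of real-valued $f$ with $\|f\|<\infty$ (a complete seminormed space) and $\mathcal E'=\{f\in\mathcal E:\|f\|<\infty\}$. Under $\bar\sigma(0)\ge0$, $I$ restricted to $\mathcal E'$ is continuous for $\|\cdot\|$; $\mathcal L^1_{(L)}$ denotes the closure of $\mathcal E'$ in $\mathcal F$ with respect to $\|\cdot\|$, and $\int_{(L)}$ the unique $\|\cdot\|$-continuous linear extension of $I|_{\mathcal E'}$ to $\mathcal L^1_{(L)}$. *)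

(* Defs.v *)
From HB Require Import structures.
From mathcomp Require Import all_boot all_order all_algebra.
From mathcomp Require Import all_classical all_reals.
From mathcomp Require Import ereal topology normedtype sequences.
Set Implicit Arguments. Unset Strict Implicit. Unset Printing Implicit Defensive.
Import Order.TTheory GRing.Theory Num.Theory.
Import numFieldNormedType.Exports.
Local Open Scope classical_set_scope.
Local Open Scope ring_scope.

(* Paths S = (S_j)_{j in N_0} are sequences nat -> R; a trajectory set is a
   set Tr : set (nat -> R) (with S_0 = s0, stated as a hypothesis). *)

(* A simple portfolio (V, n, H): n in N = {1,2,...}; H_i nonanticipating,
   i.e. H_i(S) depends only on S_0,...,S_i. Only H_i for i < n matter. *)
Record sportf (R : realType) := SPortf {
  sp_V : R;
  sp_n : nat;
  sp_n_gt0 : (0 < sp_n)%N;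
  sp_H : nat -> (nat -> R) -> R;
  sp_nonanticipating : forall i (w w' : nat -> R),
      (forall k, (k <= i)%N -> w k = w' k) -> sp_H i w = sp_H i w' }.

Section Defs.
Variable R : realType.
Variable Tr : set (nat -> R).

Definition wealth (p : sportf R) (j : nat) (w : nat -> R) : R :=
  sp_V p + \sum_(0 <= i < minn j (sp_n p)) sp_H p i w * (w i.+1 - w i).

Definition wealth_inf (p : sportf R) (w : nat -> R) : R := wealth p (sp_n p) w.

Definition pos_sportf (p : sportf R) : Prop :=
  0 <= sp_V p /\ forall w, Tr w -> 0 <= wealth_inf p w.

Definition is_gen (P : nat -> sportf R) : Prop :=
  forall m, (0 < m)%N -> pos_sportf (P m).

Definition is_pos_gen (P : nat -> sportf R) : Prop :=
  is_gen P /\ forall j w, Tr w -> wealth (P 0%N) j w = 0.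

(* sum_{m>=0} Pi^{m}_infty(S) in (-oo,+oo] (terms m >= 1 are >= 0 on Tr) *)
Definition gen_value (P : nat -> sportf R) (w : nat -> R) : \bar R :=
  ((wealth_inf (P 0%N) w)%:E + \sum_(1 <= m <oo) (wealth_inf (P m) w)%:E)%E.

Definition endow (P : nat -> sportf R) : \bar R :=
  ((sp_V (P 0%N))%:E + \sum_(1 <= m <oo) (sp_V (P m))%:E)%E.

Definition superhedges (f : (nat -> R) -> \bar R) (P : nat -> sportf R) : Prop :=
  forall w, Tr w -> (f w <= gen_value P w)%E.

Definition Ibar (f : (nat -> R) -> \bar R) : \bar R :=
  ereal_inf [set V | exists P, is_pos_gen P /\ superhedges f P /\ V = endow P].

Definition sigma_bar (f : (nat -> R) -> \bar R) : \bar R :=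
  ereal_inf [set V | exists P, is_gen P /\ superhedges f P /\ V = endow P].

Definition normL (f : (nat -> R) -> R) : \bar R :=
  Ibar (fun w => (`|f w|)%:E).

Definition inE (e : (nat -> R) -> R) : Prop :=
  exists p : sportf R, forall w, Tr w -> e w = wealth_inf p w.

Definition inE' (e : (nat -> R) -> R) : Prop := inE e /\ (normL e < +oo)%E.

(* f in L^1_(L): closure of E' in F = {f real-valued, ||f|| < oo} *)
Definition inL1 (f : (nat -> R) -> R) : Prop :=
  (normL f < +oo)%E /\
  forall eps : R, 0 < eps ->
    exists e, inE' e /\ (normL (fun w => (f w - e w)%R) < eps%:E)%E.

(* I(Pi^{V,n,H}_infty) := V  (well defined when \bar sigma(0) >= 0) *)
Definition Ival (e : (nat -> R) -> R) : R :=
  xget (0 : R) [set V : R | exists p : sportf R,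
                    V = sp_V p /\ forall w, Tr w -> e w = wealth_inf p w].

(* \int_(L) f : the continuous extension of I|E' to L^1_(L), given by
   lim_k I(e_k) for any e_k in E' with ||f - e_k|| -> 0. *)
Definition intL (f : (nat -> R) -> R) : R :=
  xget (0 : R) [set c : R | exists e : nat -> (nat -> R) -> R,
     (forall k, inE' (e k)) /\
     ((fun k => normL (fun w => f w - e k w)) @ \oo --> (0 : \bar R)) /\
     ((fun k => Ival (e k)) @ \oo --> c)].

End Defs.

(* Main.v *)
Require Import Defs.
From HB Require Import structures.
From mathcomp Require Import all_boot all_order all_algebra.
From mathcomp Require Import all_classical all_reals.
From mathcomp Require Import ereal topology normedtype sequences.
From mathcomp Require Import ring lra zify.
Import Order.TTheory GRing.Theory Num.Theory.
Import numFieldNormedType.Exports.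
Set Implicit Arguments. Unset Strict Implicit. Unset Printing Implicit Defensive.
Local Open Scope classical_set_scope.
Local Open Scope ring_scope.

Lemma sum_trunc (R : realType) (F : nat -> R) j n :
  \sum_(0 <= i < minn j n) F i = \sum_(0 <= i < j) (if (i < n)%N then F i else 0).
Proof.
rewrite -big_mkcond /=; case: (leqP j n) => h.
  rewrite big_nat_cond [RHS]big_nat_cond.
  by apply: eq_bigl => i; rewrite andbT; lia.
by rewrite (big_nat_widen _ _ _ _ _ (ltnW h)).
Qed.

Definition lin_H (R : realType) (p q : sportf R) (a b : R) (i : nat) (w : nat -> R) : R :=
  a * (if (i < sp_n p)%N then sp_H p i w else 0) +
  b * (if (i < sp_n q)%N then sp_H q i w else 0).

Lemma lin_nonant (R : realType) (p q : sportf R) (a b : R) i (w w' : nat -> R) :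
  (forall k, (k <= i)%N -> w k = w' k) -> lin_H p q a b i w = lin_H p q a b i w'.
Proof.
move=> H; rewrite /lin_H.
by rewrite (sp_nonanticipating p H) (sp_nonanticipating q H).
Qed.

Lemma lin_n_gt0 (R : realType) (p q : sportf R) : (0 < maxn (sp_n p) (sp_n q))%N.
Proof. by rewrite leq_max sp_n_gt0. Qed.

Definition lin (R : realType) (p q : sportf R) (a b : R) : sportf R :=
  @SPortf R (a * sp_V p + b * sp_V q) (maxn (sp_n p) (sp_n q)) (lin_n_gt0 p q)
    (lin_H p q a b) (@lin_nonant R p q a b).

Lemma wealthE (R : realType) (p : sportf R) j w : wealth p j w =
  sp_V p + \sum_(0 <= i < j) (if (i < sp_n p)%N then sp_H p i w * (w i.+1 - w i) else 0).
Proof. by rewrite /wealth sum_trunc. Qed.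

Lemma wealth_lin (R : realType) (p q : sportf R) a b j w :
  wealth (lin p q a b) j w = a * wealth p j w + b * wealth q j w.
Proof.
rewrite !wealthE /= !mulrDr addrACA; congr (_ + _).
rewrite !mulr_sumr -big_split /=; apply: eq_bigr => i _.
rewrite /lin_H leq_max.
case: (i < sp_n p)%N; case: (i < sp_n q)%N => /=; rewrite ?mulr0 ?addr0 ?add0r //; ring.
Qed.

Lemma wealth_ge (R : realType) (p : sportf R) N w : (sp_n p <= N)%N ->
  wealth p N w = wealth_inf p w.
Proof. by move=> H; rewrite /wealth_inf /wealth (minn_idPr H) minnn. Qed.

Lemma wealth_inf_lin (R : realType) (p q : sportf R) a b w :
  wealth_inf (lin p q a b) w = a * wealth_inf p w + b * wealth_inf q w.
Proof.
rewrite {1}/wealth_inf wealth_lin /= !wealth_ge //; by rewrite ?leq_maxl ?leq_maxr.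
Qed.

Lemma cstp_n_gt0 : (0 < 1)%N. Proof. by []. Qed.
Lemma cstp_nonant (R : realType) i (w w' : nat -> R) :
  (forall k, (k <= i)%N -> w k = w' k) -> (fun _ _ => 0 : R) i w = (fun _ _ => 0 : R) i w'.
Proof. by []. Qed.
Definition cstp (R : realType) (c : R) : sportf R :=
  @SPortf R c 1 cstp_n_gt0 (fun _ _ => 0) (@cstp_nonant R).

Lemma wealth_cstp (R : realType) (c : R) j w : wealth (cstp c) j w = c.
Proof. by rewrite /wealth /= big1 ?addr0 // => i _; rewrite mul0r. Qed.

Lemma wealth_inf_cstp (R : realType) (c : R) w : wealth_inf (cstp c) w = c.
Proof. exact: wealth_cstp. Qed.

Lemma series_shift (R : realType) (u v : nat -> \bar R) :
  (forall m, (0 < m)%N -> u m = v m) ->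
  (\sum_(1 <= m <oo) u m = \sum_(1 <= m <oo) v m)%E.
Proof.
move=> H; apply: congr_lim; apply/funext => n; apply: eq_big_nat => i /andP[hi _].
exact: H.
Qed.

Lemma comb_series (R : realType) (a b u0 v0 : R) (u v : nat -> R) :
  0 <= a -> 0 <= b -> (forall m, 0 <= u m) -> (forall m, 0 <= v m) ->
  ((a * u0 + b * v0)%:E + \sum_(1 <= m <oo) (a * u m + b * v m)%:E =
   a%:E * (u0%:E + \sum_(1 <= m <oo) (u m)%:E) + b%:E * (v0%:E + \sum_(1 <= m <oo) (v m)%:E))%E.
Proof.
move=> a0 b0 u_ge0 v_ge0.
have -> : (\sum_(1 <= m <oo) (a * u m + b * v m)%:E =
   \sum_(1 <= m <oo) (a%:E * (u m)%:E + b%:E * (v m)%:E))%E.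
  by apply: series_shift => m _; rewrite EFinD !EFinM.
rewrite nneseriesD; last 2 first.
- by move=> i hi _; apply: mule_ge0; rewrite lee_fin // u_ge0.
- by move=> i hi _; apply: mule_ge0; rewrite lee_fin // v_ge0.
rewrite nneseriesZl; last by move=> i _; rewrite lee_fin.
rewrite nneseriesZl; last by move=> i _; rewrite lee_fin.
rewrite muleDr ?fin_num_adde_defr // muleDr ?fin_num_adde_defr //.
by rewrite EFinD !EFinM addeACA.
Qed.

Definition cut (R : realType) (u : nat -> R) (m : nat) : R := if m is 0%N then 0 else u m.

Lemma cut_series (R : realType) (u : nat -> R) :
  (\sum_(1 <= m <oo) (u m)%:E = \sum_(1 <= m <oo) (cut u m)%:E)%E.
Proof. by apply: series_shift; case. Qed.

Lemma comb_series' (R : realType) (a b u0 v0 : R) (u v : nat -> R) :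
  0 <= a -> 0 <= b -> (forall m, (0 < m)%N -> 0 <= u m) -> (forall m, (0 < m)%N -> 0 <= v m) ->
  ((a * u0 + b * v0)%:E + \sum_(1 <= m <oo) (a * u m + b * v m)%:E =
   a%:E * (u0%:E + \sum_(1 <= m <oo) (u m)%:E) + b%:E * (v0%:E + \sum_(1 <= m <oo) (v m)%:E))%E.
Proof.
move=> a0 b0 hu hv.
rewrite (cut_series u) (cut_series v) -comb_series //; last 2 first.
- by case => //= m; apply: hu.
- by case => //= m; apply: hv.
congr (_ + _)%E; apply: series_shift; by case.
Qed.

Definition addP (R : realType) (P : nat -> sportf R) (p : sportf R) : nat -> sportf R :=
  fun m => if m is 0%N then lin (P 0%N) p 1 1 else P m.
Definition combP (R : realType) (P Q : nat -> sportf R) (a b : R) : nat -> sportf R :=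
  fun m => lin (P m) (Q m) a b.
Definition zeroP (R : realType) : nat -> sportf R := fun _ => cstp 0.

Lemma gen_value_addP (R : realType) (P : nat -> sportf R) p w :
  gen_value (addP P p) w = ((wealth_inf p w)%:E + gen_value P w)%E.
Proof.
rewrite /gen_value (@series_shift _ _ (fun m => (wealth_inf (P m) w)%:E)); last first.
  by case.
rewrite /= wealth_inf_lin !mul1r EFinD (addeC (wealth_inf (P 0%N) w)%:E) addeA //.
Qed.

Lemma endow_addP (R : realType) (P : nat -> sportf R) p :
  endow (addP P p) = ((sp_V p)%:E + endow P)%E.
Proof.
rewrite /endow (@series_shift _ _ (fun m => (sp_V (P m))%:E)); last first.
  by case.
rewrite /= !mul1r EFinD (addeC (sp_V (P 0%N))%:E) addeA //.
Qed.

Lemma gen_value_combP (R : realType) (Tr : set (nat -> R)) (P Q : nat -> sportf R) a b w :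
  is_gen Tr P -> is_gen Tr Q -> Tr w -> 0 <= a -> 0 <= b ->
  gen_value (combP P Q a b) w = (a%:E * gen_value P w + b%:E * gen_value Q w)%E.
Proof.
move=> hP hQ hw a0 b0; rewrite /gen_value /combP /=.
rewrite (@series_shift _ _ (fun m => (a * wealth_inf (P m) w + b * wealth_inf (Q m) w)%:E)); last first.
  by move=> m _; rewrite wealth_inf_lin.
rewrite wealth_inf_lin comb_series' //.
- by move=> m /hP [_ /(_ w hw)].
- by move=> m /hQ [_ /(_ w hw)].
Qed.

Lemma endow_combP (R : realType) (Tr : set (nat -> R)) (P Q : nat -> sportf R) a b :
  is_gen Tr P -> is_gen Tr Q -> 0 <= a -> 0 <= b ->
  endow (combP P Q a b) = (a%:E * endow P + b%:E * endow Q)%E.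
Proof.
move=> hP hQ a0 b0; rewrite /endow /combP /=.
rewrite comb_series' //.
- by move=> m /hP [].
- by move=> m /hQ [].
Qed.

Lemma gen_value_zeroP (R : realType) w : gen_value (@zeroP R) w = 0%E.
Proof.
rewrite /gen_value /zeroP wealth_inf_cstp eseries0 ?adde0 // => i _ _.
Qed.

Lemma endow_zeroP (R : realType) : endow (@zeroP R) = 0%E.
Proof. by rewrite /endow /zeroP /= eseries0 ?adde0. Qed.

Definition Hyp (R : realType) (Tr : set (nat -> R)) :=
  (0 <= sigma_bar Tr (fun _ => 0%E))%E.

Lemma Tr_nonempty (R : realType) (Tr : set (nat -> R)) : Hyp Tr -> exists w, Tr w.
Proof.
move=> Hs; case: (pselect (exists w, Tr w)) => // hne; exfalso.
pose P := fun m : nat => if m is 0%N then cstp (-1 : R) else cstp 0.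
have : (sigma_bar Tr (fun _ => 0%E) <= endow P)%E.
  apply: ereal_inf_lbound; exists P; split; last split => //.
  - by case => // m _; split => // w _; rewrite wealth_inf_cstp.
  - by move=> w hw; exfalso; apply: hne; exists w.
rewrite /endow eseries0; last by case.
rewrite adde0 /= => h; have := le_trans Hs h; rewrite lee_fin; lra.
Qed.

Lemma Ibar_ge0 (R : realType) (Tr : set (nat -> R)) g : Hyp Tr -> (0 <= Ibar Tr g)%E.
Proof.
move=> Hs; have [w0 hw0] := Tr_nonempty Hs.
apply: le_ereal_inf_tmp => _ [P [[hg h0] [_ ->]]].
have V0 : sp_V (P 0%N) = 0.
  by have := h0 0%N w0 hw0; rewrite /wealth min0n big_geq // addr0.
rewrite /endow V0 add0e.
apply: nneseries_ge0 => n hn _.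
by case: (hg n hn).
Qed.

Lemma K_lemma (R : realType) (Tr : set (nat -> R)) (p : sportf R) e g : Hyp Tr ->
  (forall w, Tr w -> e w = wealth_inf p w) ->
  (forall w, Tr w -> ((- e w)%:E <= g w)%E) ->
  ((- sp_V p)%:E <= Ibar Tr g)%E.
Proof.
move=> Hs hrep hg; apply: le_ereal_inf_tmp => _ [P [[hgen h0] [hsup ->]]].
have : (sigma_bar Tr (fun _ => 0%E) <= endow (addP P p))%E.
  apply: ereal_inf_lbound; exists (addP P p); split; last split => //.
  - by case => // m _; apply: hgen.
  - move=> w hw /=; rewrite gen_value_addP -(hrep w hw).
    have -> : 0%E = ((e w)%:E + (- e w)%:E)%E by rewrite -EFinD subrr.
    by apply: leeD2l; exact: le_trans (hg w hw) (hsup w hw).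
rewrite endow_addP => h; move: (le_trans Hs h).
case: (endow P) => [r| |] //=; rewrite ?leey // -EFinD !lee_fin; lra.
Qed.

Lemma abs_le (R : realType) (x : R) (N : \bar R) :
  ((- x)%:E <= N)%E -> (x%:E <= N)%E -> ((`|x|)%:E <= N)%E.
Proof.
case: N => [r| |] //=; rewrite ?leey // !lee_fin => h1 h2.
by rewrite ler_norml; apply/andP; split; lra.
Qed.

Lemma D_lemma (R : realType) (Tr : set (nat -> R)) (p q : sportf R) e e' : Hyp Tr ->
  (forall w, Tr w -> e w = wealth_inf p w) ->
  (forall w, Tr w -> e' w = wealth_inf q w) ->
  ((`|sp_V p - sp_V q|)%:E <= normL Tr (fun w => (e w - e' w)%R))%E.
Proof.
move=> Hs hp hq; apply: abs_le.
- have := @K_lemma R Tr (lin p q 1 (-1)) (fun w => e w - e' w)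
     (fun w => (`|e w - e' w|)%:E) Hs.
  rewrite /= !mulN1r !mul1r; apply.
  + by move=> w hw; rewrite wealth_inf_lin hp // hq //; ring.
  + by move=> w hw; rewrite lee_fin -normrN; apply: ler_norm.
- have := @K_lemma R Tr (lin q p 1 (-1)) (fun w => e' w - e w)
     (fun w => (`|e w - e' w|)%:E) Hs.
  rewrite /= !mulN1r !mul1r opprB; apply.
  + by move=> w hw; rewrite wealth_inf_lin hp // hq //; ring.
  + by move=> w hw; rewrite lee_fin opprB; apply: ler_norm.
Qed.

Lemma normL_zero (R : realType) (Tr : set (nat -> R)) h :
  (forall w, Tr w -> h w = 0) -> (normL Tr h <= 0)%E.
Proof.
move=> h0; rewrite -endow_zeroP; apply: ereal_inf_lbound; exists (@zeroP R).
split; last split => //.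
- split; first by move=> m _; split => // w _; rewrite wealth_inf_cstp.
  by move=> j w _; rewrite wealth_cstp.
- by move=> w hw; rewrite gen_value_zeroP h0 // normr0.
Qed.

Lemma normL_cst (R : realType) (Tr : set (nat -> R)) (c : R) :
  (normL Tr (fun _ => c) <= (`|c|)%:E)%E.
Proof.
pose P := fun m : nat => if m is 1%N then cstp `|c| else cstp 0.
have hs : forall (u : nat -> R), (forall m, 0 <= u m) -> (forall m, (1 < m)%N -> u m = 0) ->
    (\sum_(1 <= m <oo) (u m)%:E = (u 1%N)%:E)%E.
  move=> u u0 u1; rewrite (@nneseries_split _ _ 1 1); last by move=> k _; rewrite lee_fin.
  rewrite big_nat1 eseries0 ?adde0 // => i hi _; rewrite u1 //.
have : (endow P = (`|c|)%:E)%E.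
  rewrite /endow /= add0e (hs (fun m => sp_V (P m))) //.
  - by case => [|[|m]] //=.
  - by case => [|[|m]] //=.
move=> <-; apply: ereal_inf_lbound; exists P; split; last split => //.
- split; first by case => [|[|m]] _ //=; split => [|w _]; rewrite /= ?wealth_inf_cstp ?normr_ge0.
  by move=> j w _; rewrite /P wealth_cstp.
- move=> w hw; rewrite /gen_value /= wealth_inf_cstp add0e.
  rewrite (hs (fun m => wealth_inf (P m) w)) //.
  - by rewrite /= wealth_inf_cstp.
  - by case => [|[|m]] //=; rewrite wealth_inf_cstp.
  - by case => [|[|m]] //=; rewrite wealth_inf_cstp.
Qed.

Lemma normL_comb (R : realType) (Tr : set (nat -> R)) f g h (a b x y : R) :
  (normL Tr f < x%:E)%E -> (normL Tr g < y%:E)%E ->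
  (forall w, Tr w -> `|h w| <= `|a| * `|f w| + `|b| * `|g w|) ->
  (normL Tr h <= (`|a| * x + `|b| * y)%:E)%E.
Proof.
move=> /ereal_inf_lt [_ [P [[hP hP0] [hsP ->]]] hPx].
move=> /ereal_inf_lt [_ [Q [[hQ hQ0] [hsQ ->]]] hQy] hh.
apply: (@le_trans _ _ (endow (combP P Q `|a| `|b|))).
  apply: ereal_inf_lbound; exists (combP P Q `|a| `|b|); split; last split => //.
  - split.
    + move=> m hm; split.
        by rewrite /= addr_ge0 // mulr_ge0 //; [case: (hP m hm)|case: (hQ m hm)].
      move=> w hw; rewrite wealth_inf_lin addr_ge0 // mulr_ge0 //.
        by case: (hP m hm) => _ /(_ w hw).
      by case: (hQ m hm) => _ /(_ w hw).
    + by move=> j w hw; rewrite /combP wealth_lin hP0 // hQ0 // !mulr0 addr0.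
  - move=> w hw; rewrite (@gen_value_combP R Tr P Q `|a| `|b| w hP hQ hw) //.
    apply: (@le_trans _ _ ((`|a| * `|f w| + `|b| * `|g w|)%:E)); first by rewrite lee_fin hh.
    rewrite EFinD !EFinM; apply: leeD; apply: lee_wpmul2l => //; rewrite ?lee_fin //.
    + exact: hsP.
    + exact: hsQ.
rewrite (@endow_combP R Tr P Q `|a| `|b| hP hQ) // EFinD !EFinM; apply: leeD; apply: lee_wpmul2l => //;
  rewrite ?lee_fin //; exact: ltW.
Qed.

Lemma Ival_spec (R : realType) (Tr : set (nat -> R)) e : Defs.inE Tr e ->
  exists p, Ival Tr e = sp_V p /\ forall w, Tr w -> e w = wealth_inf p w.
Proof.
move=> [p hp].
have : [set V : R | exists p : sportf R, V = sp_V p /\ forall w, Tr w -> e w = wealth_inf p w]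
   (Ival Tr e).
  by apply: xgetPex; exists (sp_V p), p.
by move=> [q [-> hq]]; exists q.
Qed.

Lemma small_eq (R : realType) (x y : R) : (forall eps, 0 < eps -> `|x - y| < eps) -> x = y.
Proof.
move=> H; case: (eqVneq (x - y) 0) => [/eqP|hne]; first by rewrite subr_eq0 => /eqP.
have := H (`|x - y|); rewrite normr_gt0 hne ltxx => /(_ isT) //.
Qed.

Lemma Ival_rep (R : realType) (Tr : set (nat -> R)) (p : sportf R) e : Hyp Tr ->
  (forall w, Tr w -> e w = wealth_inf p w) -> Ival Tr e = sp_V p.
Proof.
move=> Hs hp; have [q [-> hq]] := Ival_spec (ex_intro _ p hp).
have := le_trans (D_lemma Hs hq hp) (normL_zero (h:=fun w => (e w - e w)%R) (Tr:=Tr) _).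
rewrite lee_fin normr_le0 subr_eq0 => /(_ (fun w _ => subrr _)) /eqP //.
Qed.

Lemma inE_lin (R : realType) (Tr : set (nat -> R)) e e' (a b : R) :
  Defs.inE Tr e -> Defs.inE Tr e' -> Defs.inE Tr (fun w => a * e w + b * e' w).
Proof.
move=> [p hp] [q hq]; exists (lin p q a b) => w hw.
by rewrite wealth_inf_lin hp // hq.
Qed.

Lemma Ival_lin (R : realType) (Tr : set (nat -> R)) e e' (a b : R) : Hyp Tr ->
  Defs.inE Tr e -> Defs.inE Tr e' -> Ival Tr (fun w => a * e w + b * e' w) = a * Ival Tr e + b * Ival Tr e'.
Proof.
move=> Hs /Ival_spec [p [-> hp]] /Ival_spec [q [-> hq]].
rewrite (@Ival_rep _ _ (lin p q a b)) // => w hw.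
by rewrite wealth_inf_lin hp // hq.
Qed.

Lemma Ival_cst (R : realType) (Tr : set (nat -> R)) (c : R) : Hyp Tr ->
  Ival Tr (fun _ => c) = c.
Proof.
by move=> Hs; rewrite (@Ival_rep _ _ (cstp c)) // => w _; rewrite wealth_inf_cstp.
Qed.

Lemma Ival_diff (R : realType) (Tr : set (nat -> R)) e e' : Hyp Tr ->
  Defs.inE Tr e -> Defs.inE Tr e' ->
  ((`|Ival Tr e - Ival Tr e'|)%:E <= normL Tr (fun w => (e w - e' w)%R))%E.
Proof.
move=> Hs /Ival_spec [p [-> hp]] /Ival_spec [q [-> hq]]; exact: D_lemma.
Qed.

Lemma normL_diff (R : realType) (Tr : set (nat -> R)) f e e' (x y : R) :
  (normL Tr (fun w => (f w - e w)%R) < x%:E)%E ->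
  (normL Tr (fun w => (f w - e' w)%R) < y%:E)%E ->
  (normL Tr (fun w => (e w - e' w)%R) <= (x + y)%:E)%E.
Proof.
move=> h1 h2; have := normL_comb (a:=1) (b:=1) (h:=fun w => (e w - e' w)%R) h1 h2.
rewrite normr1 !mul1r; apply => w _.
have -> : e w - e' w = (f w - e' w) - (f w - e w) by ring.
by rewrite !mul1r [X in _ <= X]addrC; exact: ler_normB.
Qed.

Lemma normL_fin (R : realType) (Tr : set (nat -> R)) f :
  (normL Tr f < +oo)%E -> exists x : R, (normL Tr f < x%:E)%E.
Proof.
case: (normL Tr f) => [r _| //| _].
- by exists (r + 1); rewrite lte_fin; lra.
- by exists 0; rewrite ltNyr.
Qed.

Definition WA (R : realType) (Tr : set (nat -> R)) (f : (nat -> R) -> R) (c : R) :=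
  forall eps : R, 0 < eps -> exists e, inE' Tr e /\
    (normL Tr (fun w => (f w - e w)%R) < eps%:E)%E /\ `|c - Ival Tr e| < eps.

Lemma tri3 (R : realType) (x a b y : R) : `|x - y| <= `|x - a| + `|a - b| + `|b - y|.
Proof.
apply: (le_trans (ler_distD a x y)); rewrite -addrA lerD2l; exact: ler_distD.
Qed.

Lemma WA_unique (R : realType) (Tr : set (nat -> R)) f c d : Hyp Tr ->
  WA Tr f c -> WA Tr f d -> c = d.
Proof.
move=> Hs hc hd; apply: small_eq => eps heps.
have he4 : 0 < eps / 4 by lra.
have [e [[hE _] [h1 h2]]] := hc _ he4.
have [e' [[hE' _] [h1' h2']]] := hd _ he4.
have := le_trans (Ival_diff Hs hE hE') (normL_diff h1 h1'); rewrite lee_fin => h3.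
apply: (le_lt_trans (tri3 _ (Ival Tr e) (Ival Tr e') _)).
rewrite (distrC (Ival Tr e')); lra.
Qed.

Definition Sset (R : realType) (Tr : set (nat -> R)) (f : (nat -> R) -> R) (c : R) :=
  exists e : nat -> (nat -> R) -> R,
     (forall k, inE' Tr (e k)) /\
     ((fun k => normL Tr (fun w => f w - e k w)) @ \oo --> (0 : \bar R)) /\
     ((fun k => Ival Tr (e k)) @ \oo --> c).

Lemma WA_of_S (R : realType) (Tr : set (nat -> R)) f c : Sset Tr f c -> WA Tr f c.
Proof.
move=> [e [hE [/fine_cvgP [hfin hcv] hI]]] eps heps.
move/cvgrPdist_lt : hcv => /(_ eps heps) hcv.
move/cvgrPdist_lt : hI => /(_ eps heps) hI.
have /filter_ex [k [hk1 [hk2 hk3]]] : \forall k \near \oo,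
    (normL Tr (fun w => f w - e k w) \is a fin_num) /\
    `|0 - fine (normL Tr (fun w => f w - e k w))| < eps /\ `|c - Ival Tr (e k)| < eps.
  near=> k; split; [near: k; exact: hfin|split; near: k; [exact: hcv|exact: hI]].
exists (e k); split => //; split => //.
rewrite -(fineK hk1) lte_fin; apply: le_lt_trans hk2.
by rewrite sub0r normrN ler_norm.
Unshelve. all: by end_near.
Qed.

Lemma S_nonempty (R : realType) (Tr : set (nat -> R)) f : Hyp Tr -> inL1 Tr f ->
  exists c, Sset Tr f c.
Proof.
move=> Hs [_ happ].
pose eps := fun k : nat => (k.+1%:R)^-1 : R.
have eps_gt0 : forall k, 0 < eps k by move=> k; rewrite invr_gt0 ltr0n.
have [E hE] := choice (fun k => happ (eps k) (eps_gt0 k)).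
pose a := fun k => Ival Tr (E k).
have hdiff : forall j k, `|a j - a k| <= eps j + eps k.
  move=> j k; have := le_trans (Ival_diff Hs (hE j).1.1 (hE k).1.1)
    (normL_diff (hE j).2 (hE k).2).
  by rewrite lee_fin.
pose S := range (fun k => a k - eps k).
have S0 : S !=set0 by exists (a 0%N - eps 0%N), 0%N.
have hub : forall j, ubound S (a j + eps j).
  move=> j _ [k _ <-]; have := hdiff k j; rewrite ler_norml => /andP[_ h]; lra.
have hsup : has_sup S by split => //; exists (a 0%N + eps 0%N); exact: hub.
have hc : forall j, `|sup S - a j| <= eps j.
  move=> j; rewrite ler_norml; apply/andP; split.
  - have : a j - eps j <= sup S by apply: sup_upper_bound => //; exists j.
    lra.
  - have := ge_sup S0 (hub j); lra.
have heps : forall e : R, 0 < e -> \forall k \near \oo, eps k < e.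
  by move=> e he; exact: (near_infty_natSinv_lt (PosNum he)).
exists (sup S), E; split; first by move=> k; exact: (hE k).1.
split.
- apply/fine_cvgP; split.
    apply: nearW => k; rewrite ge0_fin_numE ?Ibar_ge0 //.
    by apply: lt_trans (hE k).2 _; rewrite ltry.
  apply/cvgrPdist_lt => e he; have := heps e he; apply: filterS => k hk.
  rewrite sub0r normrN /=; have h0 := Ibar_ge0 (fun w => (`|f w - E k w|)%:E) Hs.
  have h1 := (hE k).2; move: h0 h1; rewrite /normL.
  case: (Ibar _ _) => [r| |] //=; rewrite ?lee_fin ?lte_fin => h0 h1.
  by rewrite ger0_norm //; lra.
- apply/cvgrPdist_lt => e he; have := heps e he; apply: filterS => k hk.
  have := hc k; rewrite /a; lra.
Qed.

Lemma normL_lt_ltry (R : realType) (Tr : set (nat -> R)) f (x : R) :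
  (normL Tr f <= x%:E)%E -> (normL Tr f < +oo)%E.
Proof. by move=> h; apply: le_lt_trans h _; rewrite ltry. Qed.

Lemma WA_lin (R : realType) (Tr : set (nat -> R)) f g c d (a b : R) : Hyp Tr ->
  WA Tr f c -> WA Tr g d -> WA Tr (fun w => a * f w + b * g w) (a * c + b * d).
Proof.
move=> Hs hc hd eps heps.
pose del := eps / (`|a| + `|b| + 1).
have hA : 0 <= `|a| := normr_ge0 a.
have hB : 0 <= `|b| := normr_ge0 b.
have hpos : 0 < `|a| + `|b| + 1 by lra.
have hdel : del * (`|a| + `|b| + 1) = eps by rewrite /del divfK // gt_eqF.
have del0 : 0 < del by rewrite /del divr_gt0.
have [e [[hE hEn] [h1 h2]]] := hc _ del0.
have [e' [[hE' hEn'] [h1' h2']]] := hd _ del0.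
exists (fun w => a * e w + b * e' w); split; [split|split].
- exact: inE_lin.
- have [x hx] := normL_fin hEn; have [y hy] := normL_fin hEn'.
  apply: normL_lt_ltry; apply: (normL_comb hx hy) => w _.
  by apply: le_trans (ler_normD _ _) _; rewrite !normrM.
- apply: le_lt_trans; first apply: (normL_comb h1 h1') => w _.
    have -> : a * f w + b * g w - (a * e w + b * e' w) =
              a * (f w - e w) + b * (g w - e' w) by ring.
    by apply: le_trans (ler_normD _ _) _; rewrite !normrM.
  rewrite lte_fin; nra.
- rewrite Ival_lin //.
  have -> : a * c + b * d - (a * Ival Tr e + b * Ival Tr e') =
            a * (c - Ival Tr e) + b * (d - Ival Tr e') by ring.
  apply: le_lt_trans (ler_normD _ _) _; rewrite !normrM; nra.
Qed.

Lemma inE'_cst (R : realType) (Tr : set (nat -> R)) (c : R) : inE' Tr (fun _ => c).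
Proof.
split; first by exists (cstp c) => w _; rewrite wealth_inf_cstp.
exact: normL_lt_ltry (normL_cst Tr c).
Qed.

Lemma WA_cst (R : realType) (Tr : set (nat -> R)) (c : R) : Hyp Tr ->
  WA Tr (fun _ => c) c.
Proof.
move=> Hs eps heps; exists (fun _ => c); split; first exact: inE'_cst.
split.
- apply: le_lt_trans (normL_zero _) _; first by move=> w _; rewrite subrr.
  by rewrite lte_fin.
- by rewrite Ival_cst // subrr normr0.
Qed.

Lemma WA_intL (R : realType) (Tr : set (nat -> R)) f : Hyp Tr -> inL1 Tr f ->
  WA Tr f (intL Tr f).
Proof.
move=> Hs hf; have [c hc] := S_nonempty Hs hf.
apply: WA_of_S; rewrite /intL; apply: (@xgetPex _ 0 (Sset Tr f)); by exists c.
Qed.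

Lemma inL1_of_WA (R : realType) (Tr : set (nat -> R)) f c :
  (normL Tr f < +oo)%E -> WA Tr f c -> inL1 Tr f.
Proof.
move=> hn hw; split => // eps heps.
by have [e [he [h1 _]]] := hw eps heps; exists e.
Qed.

Unset Implicit Arguments.
Set Strict Implicit.

Theorem proposition3p4 (R : realType) (s0 : R) (Tr : set (nat -> R)) :
  (forall w, Tr w -> w 0%N = s0) ->
  (0 <= sigma_bar Tr (fun _ => 0%E))%E ->
  [/\ (* linear *)
      (forall (f g : (nat -> R) -> R) (a b : R),
         inL1 Tr f -> inL1 Tr g ->
         inL1 Tr (fun w => a * f w + b * g w) /\
         intL Tr (fun w => a * f w + b * g w) = a * intL Tr f + b * intL Tr g),
      (* positive *)
      (forall f, inL1 Tr f -> (forall w, Tr w -> 0 <= f w) -> 0 <= intL Tr f),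
      (* continuous w.r.t. ||.|| *)
      (forall f, inL1 Tr f -> forall eps : R, 0 < eps ->
         exists2 delta : R, 0 < delta &
           forall g, inL1 Tr g -> (normL Tr (fun w => (g w - f w)%R) < delta%:E)%E ->
             `|intL Tr g - intL Tr f| < eps) &
      (* constant-preserving *)
      (forall c : R, inL1 Tr (fun _ => c) /\ intL Tr (fun _ => c) = c)].
Proof.
move=> _ Hs; split.
- move=> f g a b hf hg.
  have hW := WA_lin a b Hs (WA_intL Hs hf) (WA_intL Hs hg).
  have hL : inL1 Tr (fun w => a * f w + b * g w).
    apply: inL1_of_WA hW.
    have [x hx] := normL_fin hf.1; have [y hy] := normL_fin hg.1.
    apply: normL_lt_ltry; apply: (normL_comb hx hy) => w _.
    by apply: le_trans (ler_normD _ _) _; rewrite !normrM.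
  split => //; exact: WA_unique Hs (WA_intL Hs hL) hW.
- move=> f hf hpos; have hW := WA_intL Hs hf.
  case: (lerP 0 (intL Tr f)) => // hneg.
  have heps : 0 < - intL Tr f / 2 by lra.
  have [e [[hE _] [h1 h2]]] := hW _ heps.
  have [p [hV hp]] := Ival_spec hE.
  have := @K_lemma R Tr p e (fun w => (`|f w - e w|)%:E) Hs hp.
  have hK : forall w, Tr w -> ((- e w)%:E <= (`|f w - e w|)%:E)%E.
    move=> w hw; rewrite lee_fin; apply: le_trans (ler_norm _).
    by have := hpos w hw; lra.
  move/(_ hK) => hK2.
  have := lt_le_trans (le_lt_trans hK2 h1) (lexx _); rewrite lte_fin -hV => h3.
  move: h2; rewrite ltr_norml => /andP[h4 h5]; by clear -h3 h4 h5 hneg; have : False by lra.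
- move=> f hf eps heps; exists (eps / 2); first lra.
  move=> g hg hgf.
  have eta0 : 0 < eps / 16 by lra.
  have [e [[hE _] [h1 h2]]] := WA_intL Hs hg eta0.
  have [e' [[hE' _] [h1' h2']]] := WA_intL Hs hf eta0.
  have hge' : (normL Tr (fun w => (g w - e' w)%R) < (eps / 2 + eps / 8)%:E)%E.
    apply: le_lt_trans; first apply: (normL_comb (a:=1) (b:=1) hgf h1') => w _.
      by rewrite normr1 !mul1r; exact: ler_distD.
    by rewrite normr1 !mul1r lte_fin; lra.
  have := le_trans (Ival_diff Hs hE hE') (normL_diff h1 hge'); rewrite lee_fin => h3.
  apply: le_lt_trans (tri3 _ (Ival Tr e) (Ival Tr e') _) _.
  rewrite (distrC (Ival Tr e')); lra.
- move=> c.
  have hL : inL1 Tr (fun _ => c) := inL1_of_WA (inE'_cst Tr c).2 (WA_cst c Hs).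
  split => //; exact: WA_unique Hs (WA_intL Hs hL) (WA_cst c Hs).
Qed.
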